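(* Let $R$ be a hyperring such that $X=\operatorname{Spec}R$ is irreducible. Then the presheaf $\mathcal{F}_X$ on $X$ is a sheaf of hyperrings.
   Context: Hyperring: a set with a hyperoperation $+:R\times R\to\mathcal{P}^*(R)$ (nonempty subsets; extended to subsets by $A+B=\bigcup a+b$) making $(R,+,0)$ a canonical hypergroup (commutative, associative, unique $0$ with $0+x=\{x\}$, unique $-x$ with $0\in x+(-x)$, and $x\in y+z\iff z\in x+(-y)$), and a commutative monoid $(R,\cdot,1)$, with $x(y+z)=xy+xz$, $0x=0$, $0\neq1$. $\operatorname{Spec}R$ is the set of prime hyperideals with the Zariski topology (closed sets $V(I)=\{\mathfrak{p}\supseteq I\}$ for hyperideals $I$). Let $S$ be the set of elements of $R$ that are not zero-divisors (i.e. $s$ with $sx=0\Rightarrow x=0$), a multiplicative submonoid, and $K=S^{-1}R$ the localization: $R\times S$ modulo $(r_1,s_1)\sim(r_2,s_2)\iff xr_1s_2=xr_2s_1$ for some $x\in S$, with $\frac{r_1}{s_1}+\frac{r_2}{s_2}=\{\frac{y}{s_1s_2}\mid y\in r_1s_2+s_1r_2\}$ and componentwise multiplication. For open $U\subseteq X$, $\mathcal{F}_X(U):=\{u\in K\mid\text{for every }\mathfrak{p}\in U,\ u=\frac ab\text{ for some }a\in R,\ b\in S\setminus\mathfrak{p}\}$, a sub-hyperring of $K$; for $V\subseteq U$ the restriction map is the inclusion $\mathcal{F}_X(U)\hookrightarrow\mathcal{F}_X(V)$. *)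

(* Defs.v *)
(** * Hyperrings.  [hadd x y z] means  z ∈ x + y. *)
Record hyperring := HyperRing {
  carrier :> Type;
  hadd : carrier -> carrier -> carrier -> Prop;
  hzero : carrier;
  hneg : carrier -> carrier;
  hmul : carrier -> carrier -> carrier;
  hone : carrier;
  hadd_nonempty : forall x y, exists z, hadd x y z;
  hadd_comm : forall x y z, hadd x y z <-> hadd y x z;
  hadd_assoc : forall x y z w,
      (exists u, hadd x y u /\ hadd u z w) <-> (exists v, hadd y z v /\ hadd x v w);
  hadd_zero : forall x z, hadd hzero x z <-> z = x;
  hzero_unique : forall e, (forall x z, hadd e x z <-> z = x) -> e = hzero;
  hneg_spec : forall x, hadd x (hneg x) hzero;
  hneg_unique : forall x y, hadd x y hzero -> y = hneg x;
  hadd_rev : forall x y z, hadd y z x <-> hadd x (hneg y) z;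
  hmul_assoc : forall x y z, hmul x (hmul y z) = hmul (hmul x y) z;
  hmul_comm : forall x y, hmul x y = hmul y x;
  hmul_one : forall x, hmul hone x = x;
  hmul_distr : forall x y z w,
      (exists u, hadd y z u /\ w = hmul x u) <-> hadd (hmul x y) (hmul x z) w;
  hmul_zero : forall x, hmul hzero x = hzero;
  hzero_neq_one : hzero <> hone
}.

Arguments hadd {_}. Arguments hzero {_}. Arguments hneg {_}.
Arguments hmul {_}. Arguments hone {_}.

Section HR.
Variable R : hyperring.

Definition hyperideal (I : R -> Prop) : Prop :=
  (exists a, I a) /\
  (forall a b c, I a -> I b -> hadd a (hneg b) c -> I c) /\
  (forall r a, I a -> I (hmul r a)).

Definition prime_hyperideal (P : R -> Prop) : Prop :=
  hyperideal P /\ ~ P hone /\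
  (forall a b, P (hmul a b) -> P a \/ P b).

(** Points of X = Spec R are prime hyperideals; subsets of X are predicates
    on [R -> Prop] (only prime hyperideals are ever members). *)
Definition V (I : R -> Prop) : (R -> Prop) -> Prop :=
  fun p => prime_hyperideal p /\ (forall a, I a -> p a).

Definition is_closed (C : (R -> Prop) -> Prop) : Prop :=
  exists I, hyperideal I /\ forall p, C p <-> V I p.

Definition is_open (U : (R -> Prop) -> Prop) : Prop :=
  exists I, hyperideal I /\ forall p, U p <-> (prime_hyperideal p /\ ~ V I p).

Definition spec_irreducible : Prop :=
  (exists p, prime_hyperideal p) /\
  forall C1 C2, is_closed C1 -> is_closed C2 ->
    (forall p, prime_hyperideal p -> C1 p \/ C2 p) ->
    (forall p, prime_hyperideal p -> C1 p) \/ (forall p, prime_hyperideal p -> C2 p).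

Definition nzd (s : R) : Prop := forall x, hmul s x = hzero -> x = hzero.

(** Fractions r/s (s ∈ S) and the equivalence defining K = S^{-1} R. *)
Definition frac := (R * R)%type.
Definition is_frac (u : frac) : Prop := nzd (snd u).
Definition frac_eq (u v : frac) : Prop :=
  exists x, nzd x /\ hmul x (hmul (fst u) (snd v)) = hmul x (hmul (fst v) (snd u)).

(** F_X(U) as a (~-closed) set of fractions, i.e. a subset of K. *)
Definition F (U : (R -> Prop) -> Prop) (u : frac) : Prop :=
  is_frac u /\
  forall p, U p -> exists a b, nzd b /\ ~ p b /\ frac_eq u (a, b).

(** F_X(U) is a sub-hyperring of K (closed under 0, 1, -, ., and hyperaddition
    u + v = { y/(s1 s2) | y ∈ r1 s2 + s1 r2 }). *)
Definition sub_hyperring_K (A : frac -> Prop) : Prop :=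
  A (hzero, hone) /\ A (hone, hone) /\
  (forall u, A u -> A (hneg (fst u), snd u)) /\
  (forall u v, A u -> A v -> A (hmul (fst u) (fst v), hmul (snd u) (snd v))) /\
  (forall u v y, A u -> A v ->
      hadd (hmul (fst u) (snd v)) (hmul (snd u) (fst v)) y ->
      A (y, hmul (snd u) (snd v))).

(** Equality of sections over V, i.e. in F(V) ⊆ K; by the usual convention
    F(∅) is the terminal (zero) hyperring, so any two sections over ∅ agree. *)
Definition sec_eq (W : (R -> Prop) -> Prop) (u v : frac) : Prop :=
  (forall p, ~ W p) \/ frac_eq u v.

(** Sheaf condition for F_X (restriction maps are the inclusions). *)
Definition F_is_sheaf : Prop :=
  forall (U : (R -> Prop) -> Prop) (I : Type) (Ui : I -> (R -> Prop) -> Prop),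
    is_open U -> (forall i, is_open (Ui i)) ->
    (forall p, U p <-> exists i, Ui i p) ->
    (forall s t, F U s -> F U t -> (forall i, sec_eq (Ui i) s t) -> sec_eq U s t) /\
    (forall s : I -> frac, (forall i, F (Ui i) (s i)) ->
       (forall i j, sec_eq (fun p => Ui i p /\ Ui j p) (s i) (s j)) ->
       exists t, F U t /\ forall i, sec_eq (Ui i) t (s i)).

Definition F_is_sheaf_of_hyperrings : Prop :=
  (forall U, is_open U -> sub_hyperring_K (F U)) /\ F_is_sheaf.

End HR.

(* Main.v *)
Require Import Defs.
From Corelib Require Import ssreflect.
From Stdlib Require Import Classical.

Section H.
Variable R : hyperring.

Lemma mCA (x y z : R) : hmul x (hmul y z) = hmul y (hmul x z).
Proof. rewrite !hmul_assoc (hmul_comm _ x y); reflexivity. Qed.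

Lemma m0r (x : R) : hmul x hzero = hzero.
Proof. rewrite hmul_comm; apply hmul_zero. Qed.

Lemma mNr (x y : R) : hmul x (hneg y) = hneg (hmul x y).
Proof.
  apply hneg_unique. apply (proj1 (hmul_distr R x y (hneg y) hzero)).
  exists hzero. split; [apply hneg_spec | rewrite m0r; reflexivity].
Qed.

Lemma mNl (x y : R) : hmul (hneg x) y = hneg (hmul x y).
Proof. rewrite hmul_comm mNr hmul_comm; reflexivity. Qed.

Lemma nzd1 : nzd R hone.
Proof. intros x H; rewrite hmul_one in H; exact H. Qed.

Lemma nzdM (a b : R) : nzd R a -> nzd R b -> nzd R (hmul a b).
Proof. intros Ha Hb x H. rewrite <- hmul_assoc in H. apply Hb, Ha, H. Qed.

Lemma primeM (p : R -> Prop) a b : prime_hyperideal R p -> ~ p a -> ~ p b -> ~ p (hmul a b).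
Proof. intros (_&_&Hp) Ha Hb H. destruct (Hp _ _ H); auto. Qed.

End H.

Ltac bringpf a r :=
  lazymatch r with
  | hmul a _ => constr:(@eq_refl _ r)
  | hmul ?b a => constr:(hmul_comm _ a b)
  | hmul ?b ?r' => let p := bringpf a r' in
      lazymatch type of p with hmul a ?z = _ =>
        constr:(eq_trans (mCA _ a b z) (f_equal (hmul b) p)) end
  end.

Ltac solve_list :=
  lazymatch goal with
  | |- ?l = ?l => reflexivity
  | |- hmul ?a ?l = ?r => let p := bringpf a r in
        refine (eq_trans _ p); apply (f_equal (hmul a)); solve_list
  end.

Ltac acsolve := repeat rewrite <- hmul_assoc; solve_list.

Section T.
Variable R : hyperring.

Lemma test (x y z w : R) : hmul (hmul x y) (hmul z w) = hmul w (hmul (hmul y z) x).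
Proof. acsolve. Qed.

Lemma frac_eq_trans (u v w : frac R) : nzd R (snd v) -> frac_eq R u v -> frac_eq R v w -> frac_eq R u w.
Proof.
  destruct u as [r1 s1], v as [r2 s2], w as [r3 s3]; simpl.
  intros Hs2 (x&Hx&H1) (y&Hy&H2). simpl in *.
  exists (hmul (hmul x y) s2). split. apply nzdM; [apply nzdM|]; assumption.
  simpl.
  transitivity (hmul (hmul x (hmul r1 s2)) (hmul y s3)). acsolve.
  rewrite H1.
  transitivity (hmul (hmul y (hmul r2 s3)) (hmul x s1)). acsolve.
  rewrite H2. acsolve.
Qed.
End T.

Section M.
Variable R : hyperring.

Lemma open_prime (U : (R -> Prop) -> Prop) p : is_open R U -> U p -> prime_hyperideal R p.
Proof. intros (I&_&HI) Hp. apply HI in Hp. apply Hp. Qed.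

Lemma not_one p : prime_hyperideal R p -> ~ p hone.
Proof. intros (_&H&_); exact H. Qed.

Lemma subring U : is_open R U -> sub_hyperring_K R (F R U).
Proof.
  intros HU. unfold sub_hyperring_K. split; [|split; [|split; [|split]]].
  - split. apply nzd1. intros p Hp. exists hzero, hone.
    split. apply nzd1. split. apply not_one, (open_prime U); auto.
    exists hone. split. apply nzd1. reflexivity.
  - split. apply nzd1. intros p Hp. exists hone, hone.
    split. apply nzd1. split. apply not_one, (open_prime U); auto.
    exists hone. split. apply nzd1. reflexivity.
  - intros [r s] [Hu Hp]. split. exact Hu. intros p HUp.
    destruct (Hp p HUp) as (a&b&Hb&Hpb&x&Hx&E). exists (hneg a), b.
    split; [exact Hb|split; [exact Hpb|]]. exists x. split; [exact Hx|].
    simpl in *. rewrite !mNl !mNr E. reflexivity.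
  - intros [r s] [r' s'] [Hu Hp] [Hv Hq]. simpl in *. split. apply nzdM; assumption.
    intros p HUp.
    destruct (Hp p HUp) as (a&b&Hb&Hpb&x&Hx&E).
    destruct (Hq p HUp) as (a'&b'&Hb'&Hpb'&x'&Hx'&E'). simpl in *.
    exists (hmul a a'), (hmul b b'). split. apply nzdM; assumption.
    split. apply primeM; auto. apply (open_prime U); auto.
    exists (hmul x x'). split. apply nzdM; assumption. simpl.
    transitivity (hmul (hmul x (hmul r b)) (hmul x' (hmul r' b'))). acsolve.
    rewrite E E'. acsolve.
  - intros [r s] [r' s'] y [Hu Hp] [Hv Hq] Hy. simpl in *. split. apply nzdM; assumption.
    intros p HUp.
    destruct (Hp p HUp) as (a&b&Hb&Hpb&x&Hx&E).
    destruct (Hq p HUp) as (a'&b'&Hb'&Hpb'&x'&Hx'&E'). simpl in *.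
    set (M := hmul (hmul x x') (hmul b b')).
    set (N := hmul (hmul x x') (hmul s s')).
    assert (K1 : hmul M (hmul r s') = hmul N (hmul a b')).
    { unfold M, N. transitivity (hmul (hmul x (hmul r b)) (hmul x' (hmul b' s'))). acsolve.
      rewrite E. acsolve. }
    assert (K2 : hmul M (hmul s r') = hmul N (hmul b a')).
    { unfold M, N. transitivity (hmul (hmul x' (hmul r' b')) (hmul x (hmul b s))). acsolve.
      rewrite E'. acsolve. }
    assert (H1 : hadd (hmul N (hmul a b')) (hmul N (hmul b a')) (hmul M y)).
    { rewrite <- K1, <- K2. apply (proj1 (hmul_distr R _ _ _ _)). exists y. split; auto. }
    apply (proj2 (hmul_distr R _ _ _ _)) in H1. destruct H1 as (c&Hc&Ec).
    exists c, (hmul b b'). split. apply nzdM; assumption.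
    split. apply primeM; auto. apply (open_prime U); auto.
    exists (hmul x x'). split. apply nzdM; assumption. simpl.
    unfold M, N in Ec.
    transitivity (hmul (hmul (hmul x x') (hmul b b')) y). acsolve.
    rewrite Ec. acsolve.
Qed.

Lemma inter_nonempty : spec_irreducible R -> forall U1 U2 p1 p2,
  is_open R U1 -> is_open R U2 -> U1 p1 -> U2 p2 -> exists p, U1 p /\ U2 p.
Proof.
  intros [_ Hirr] U1 U2 p1 p2 (I1&HI1&E1) (I2&HI2&E2) Hp1 Hp2.
  apply NNPP. intros Hno.
  assert (Hcov : forall p, prime_hyperideal R p -> V R I1 p \/ V R I2 p).
  { intros p Hp. destruct (classic (V R I1 p)) as [h|h]; [now left|].
    destruct (classic (V R I2 p)) as [h'|h']; [now right|].
    exfalso. apply Hno. exists p. split; [apply E1|apply E2]; auto. }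
  destruct (Hirr (V R I1) (V R I2)) as [H|H].
  - exists I1. split; [auto| intros; tauto].
  - exists I2. split; [auto| intros; tauto].
  - exact Hcov.
  - apply E1 in Hp1. destruct Hp1 as [P1 N1]. apply N1, H, P1.
  - apply E2 in Hp2. destruct Hp2 as [P2 N2]. apply N2, H, P2.
Qed.

Lemma sheaf : spec_irreducible R -> F_is_sheaf R.
Proof.
  intros Hirr U I Ui HU HUi Hcov. split.
  - intros s t Hs Ht Hst. destruct (classic (exists p, U p)) as [[p Hp]|Hn].
    + right. destruct (proj1 (Hcov p) Hp) as [i Hi].
      destruct (Hst i) as [h|h]; [exfalso; exact (h p Hi)|exact h].
    + left. intros p Hp. apply Hn. eauto.
  - intros s Hs Hcomp. destruct (classic (exists p, U p)) as [[p0 Hp0]|Hn].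
    + destruct (proj1 (Hcov p0) Hp0) as [i0 Hi0].
      assert (Heq : forall i p, Ui i p -> frac_eq R (s i0) (s i)).
      { intros i p Hp.
        destruct (inter_nonempty Hirr (Ui i0) (Ui i) p0 p (HUi i0) (HUi i) Hi0 Hp) as [q Hq].
        destruct (Hcomp i0 i) as [h|h]; [exfalso; exact (h q Hq)|exact h]. }
      exists (s i0). split.
      * split. apply (Hs i0). intros p Hp. destruct (proj1 (Hcov p) Hp) as [j Hj].
        destruct (proj2 (Hs j) p Hj) as (a&b&Hb&Hpb&E).
        exists a, b. split; [exact Hb|split; [exact Hpb|]].
        apply (frac_eq_trans R _ (s j)). apply (Hs j). apply (Heq j p Hj). exact E.
      * intros i. destruct (classic (exists p, Ui i p)) as [[p Hp]|Hn].
        -- right. apply (Heq i p Hp).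
        -- left. intros p Hp. apply Hn; eauto.
    + exists (hzero, hone). split.
      * split. apply nzd1. intros p Hp. exfalso; apply Hn; eauto.
      * intros i. left. intros p Hp. apply Hn. exists p. apply Hcov. eauto.
Qed.

End M.

Theorem proposition4p28 (R : hyperring) :
  spec_irreducible R -> F_is_sheaf_of_hyperrings R.
Proof.
  intros H. split.
  - intros U HU. apply subring; exact HU.
  - apply sheaf; exact H.
Qed.
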